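(* Let $G$ be a graph and $k\ge 1$ an integer. Then $\mathrm{diam}(G)\le 2k+1$ if and only if every $k$-packing of $G$ is a general position set of $G$.
   Context: All graphs are finite, simple and connected; $\mathrm{diam}(G)$ is the maximum distance between two vertices of $G$. A set $S$ of vertices is a $k$-packing if $d(u,v)>k$ for all distinct $u,v\in S$. A set $S$ of vertices is a general position set if no three vertices of $S$ lie on a common geodesic (shortest path) of $G$. *)

(* Defs.v *)
From mathcomp Require Import all_boot.
Set Implicit Arguments. Unset Strict Implicit. Unset Printing Implicit Defensive.

Section Graphs.
Variable T : finType.
Variable e : rel T.

Definition simple_graph := symmetric e /\ irreflexive e.
Definition connected_graph := forall u v : T, connect e u v.

(* A walk from u to v: the vertex sequence u :: p; its length is size p. *)
Definition walk (u v : T) (p : seq T) : bool := path e u p && (last u p == v).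

(* Distance: the least n such that a walk of length n from u to v exists
   (searched among n < #|T|; for connected graphs this is the true distance). *)
Definition dist (u v : T) : nat :=
  find (fun n => [exists p : n.-tuple T, walk u v p]) (iota 0 #|T|).

Definition diam : nat := \max_(u : T) \max_(v : T) dist u v.

Definition packing (k : nat) (S : {set T}) : Prop :=
  forall u v, u \in S -> v \in S -> u != v -> k < dist u v.

Definition geodesic (u v : T) (p : seq T) : Prop := walk u v p /\ size p = dist u v.

Definition gp_set (S : {set T}) : Prop :=
  ~ exists x y z u v (p : seq T),
      [/\ x \in S, y \in S, z \in S & [/\ x != y, y != z & x != z]] /\
      geodesic u v p /\ [/\ x \in u :: p, y \in u :: p & z \in u :: p].
End Graphs.

(* Main.v *)
Require Import Defs.
From mathcomp Require Import all_boot.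
From mathcomp Require Import zify.

Section Aux.
Variable T : finType.
Variable e : rel T.

Lemma dist_le a b p : walk e a b p -> dist e a b <= size p.
Proof.
move=> w; rewrite /dist.
case: (ltnP (size p) #|T|) => hs.
  rewrite leqNgt; apply/negP => hf.
  have := before_find 0 hf; rewrite nth_iota // add0n.
  move=> /= hX; suff : false by []; rewrite -hX; apply/existsP; exists (in_tuple p); exact: w.
apply: leq_trans (find_size _ _) _; by rewrite size_iota.
Qed.

Lemma dist_walk a b : connected_graph e ->
  exists p, walk e a b p /\ size p = dist e a b.
Proof.
move=> con; have := con a b; case/connectP => p pp ->.
case: (shortenP pp) => p' pp' up' _.
have hs : size p' < #|T|.
  by move/card_uniqP: up' => /= <-; apply: max_card.
set P := (fun n => [exists p : n.-tuple T, walk e a (last a p') p]).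
have hP : has P (iota 0 #|T|).
  apply/hasP; exists (size p'); first by rewrite mem_iota.
  by apply/existsP; exists (in_tuple p'); rewrite /walk pp' eqxx.
have := nth_find 0 hP; rewrite has_find size_iota in hP.
rewrite nth_iota // add0n => /existsP [t ht]; exists t; split => //.
by rewrite size_tuple.
Qed.

Lemma walk_cat a b c p r : walk e a b p -> walk e b c r -> walk e a c (p ++ r).
Proof.
by rewrite /walk cat_path last_cat => /andP [-> /eqP ->] /andP [-> ->].
Qed.

Lemma dist_tri a b c : connected_graph e ->
  dist e a c <= dist e a b + dist e b c.
Proof.
move=> con; have [p [wp sp]] := dist_walk a b con.
have [r [wr sr]] := dist_walk b c con.
by rewrite -sp -sr -size_cat; apply: dist_le; apply: walk_cat wp wr.
Qed.

Lemma subpath x0 q : forall a i j, path e a q -> i <= j <= size q ->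
  path e (nth x0 (a::q) i) (take (j-i) (drop i q)) &&
  (last (nth x0 (a::q) i) (take (j-i) (drop i q)) == nth x0 (a::q) j).
Proof.
elim: q => [|c q IH] a i j.
  move=> _ /andP [hij]; rewrite /= leqn0 => /eqP hj; subst j.
  move: hij; rewrite leqn0 => /eqP ->. by rewrite /= eqxx.
move=> /= /andP [eac pq] /andP [hij hj].
case: i hij => [|i] hij.
  case: j hj {hij} => [|j] hj /=; first by [].
  rewrite /= eac /=.
  have := IH c 0 j pq; rewrite /= -ltnS hj drop0 subn0; by apply.
case: j hj hij => [|j] //= hj hij.
rewrite subSS; apply: IH => //; by rewrite -ltnS hij.
Qed.

Lemma subwalk x0 a b q i j : walk e a b q -> i <= j <= size q ->
  dist e (nth x0 (a::q) i) (nth x0 (a::q) j) <= j - i.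
Proof.
move=> /andP [pq _] hij; have := @subpath x0 q a i j pq hij => w.
have := @dist_le _ _ _ w => h; apply: leq_trans h _.
by rewrite size_take; case: ifP => //; rewrite size_drop; lia.
Qed.

Lemma geo_dist x0 a b q i j : connected_graph e -> walk e a b q ->
  size q = dist e a b -> i <= j <= size q ->
  dist e (nth x0 (a::q) i) (nth x0 (a::q) j) = j - i.
Proof.
move=> con w sq /andP [hij hj].
have h1 := @subwalk x0 a b q 0 i w ltac:(by rewrite /= (leq_trans hij hj)).
have h2 := @subwalk x0 a b q i j w ltac:(by rewrite hij hj).
have h3 := @subwalk x0 a b q j (size q) w ltac:(by rewrite hj leqnn).
move: w => /andP [_ /eqP lb].
rewrite /= -(last_nth x0) lb in h1 h3.
have t1 := dist_tri a (nth x0 (a :: q) i) b con.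
have t2 := dist_tri (nth x0 (a :: q) i) (nth x0 (a :: q) j) b con.
lia.
Qed.

Lemma walk_rev a b p : symmetric e -> walk e a b p ->
  exists r, walk e b a r /\ size r = size p.
Proof.
move=> sym; elim: p a => [|c p IH] a.
  by rewrite /walk /= => /eqP ->; exists [::]; rewrite eqxx.
rewrite /walk /= => /andP [/andP [eac pp] lb].
have [r [/andP [pr /eqP lr] sr]] := IH c ltac:(by rewrite /walk pp lb).
exists (rcons r a); rewrite /walk rcons_path last_rcons pr lr sym eac eqxx.
by rewrite size_rcons sr.
Qed.

Lemma dist_sym a b : symmetric e -> connected_graph e -> dist e a b = dist e b a.
Proof.
move=> sym con.
have H : forall a b, dist e a b <= dist e b a.
  move=> u v; have [p [wp sp]] := dist_walk v u con.
  have [r [wr sr]] := @walk_rev _ _ _ sym wp.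
  by rewrite -sp -sr; apply: dist_le.
by apply/eqP; rewrite eqn_leq !H.
Qed.

Lemma dist_diam a b : dist e a b <= diam e.
Proof.
rewrite /diam; apply: (leq_trans _ (@leq_bigmax _ (fun u => \max_(v : T) dist e u v) a)).
exact: (@leq_bigmax _ (fun v => dist e a v) b).
Qed.

Lemma dist_refl a : dist e a a = 0.
Proof. by apply/eqP; rewrite -leqn0; apply: (@dist_le a a [::]); rewrite /walk /=. Qed.

End Aux.

Lemma geo_contra (T : finType) (e : rel T) k u v p i j l :
  connected_graph e -> walk e u v p -> size p = dist e u v -> diam e <= 2 * k + 1 ->
  i < j -> j < l -> l <= size p ->
  k < dist e (nth u (u::p) i) (nth u (u::p) j) ->
  k < dist e (nth u (u::p) j) (nth u (u::p) l) -> False.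
Proof.
move=> con w sp hd ij jl lp.
rewrite (@geo_dist _ _ u u v p i j con w sp); last by rewrite (ltnW ij) (leq_trans (ltnW jl) lp).
rewrite (@geo_dist _ _ u u v p j l con w sp); last by rewrite (ltnW jl) lp.
have := @geo_dist _ _ u u v p i l con w sp; rewrite (ltnW (ltn_trans ij jl)) lp => /(_ isT) h.
have := @dist_diam _ e (nth u (u::p) i) (nth u (u::p) l); rewrite h.
move=> h2 h3 h4; lia.
Qed.

Lemma dir1 (T : finType) (e : rel T) (k : nat) :
  connected_graph e -> diam e <= 2 * k + 1 ->
  forall S : {set T}, packing e k S -> gp_set e S.
Proof.
move=> con hd S pk [x [y [z [u [v [p [[xS yS zS [xy yz xz]] [[w sp] [xm ym zm]]]]]]]]].
have core : forall i j l, i < j -> j < l -> l <= size p ->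
    nth u (u::p) i \in S -> nth u (u::p) j \in S -> nth u (u::p) l \in S ->
    nth u (u::p) i != nth u (u::p) j -> nth u (u::p) j != nth u (u::p) l -> False.
  move=> i j l ij jl lp iS jS lS n1 n2.
  apply: (@geo_contra _ _ k u v p i j l con w sp hd ij jl lp); exact: pk.
have ex := nth_index u xm; have ey := nth_index u ym; have ez := nth_index u zm.
have ix : index x (u::p) <= size p by rewrite -ltnS -[(size p).+1]/(size (u::p)) index_mem.
have iy : index y (u::p) <= size p by rewrite -ltnS -[(size p).+1]/(size (u::p)) index_mem.
have iz : index z (u::p) <= size p by rewrite -ltnS -[(size p).+1]/(size (u::p)) index_mem.
rewrite -ex in xS xy xz; rewrite -ey in yS xy yz; rewrite -ez in zS yz xz.
move: (index x (u::p)) (index y (u::p)) (index z (u::p)) ix iy iz xy yz xz xS yS zS.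
move=> a b c ha hb hc nab nbc nac aS bS cS.
case: (ltngtP a b) => hab; last by rewrite hab eqxx in nab.
- case: (ltngtP b c) => hbc; last by rewrite hbc eqxx in nbc.
  + by apply: (core a b c).
  + case: (ltngtP a c) => hac; last by rewrite hac eqxx in nac.
    * by apply: (core a c b) => //; rewrite eq_sym.
    * by apply: (core c a b) => //; rewrite eq_sym.
- case: (ltngtP b c) => hbc; last by rewrite hbc eqxx in nbc.
  + case: (ltngtP a c) => hac; last by rewrite hac eqxx in nac.
    * by apply: (core b a c) => //; rewrite eq_sym.
    * by apply: (core b c a) => //; rewrite eq_sym.
  + by apply: (core c b a) => //; rewrite eq_sym.
Qed.

Lemma dir2 (T : finType) (e : rel T) (k : nat) :
  symmetric e -> connected_graph e ->
  (forall S : {set T}, packing e k S -> gp_set e S) -> diam e <= 2 * k + 1.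
Proof.
move=> sym con H; rewrite /diam. apply/(@bigmax_leqP T xpredT) => u _. apply/(@bigmax_leqP T xpredT) => v _.
rewrite leqNgt; apply/negP => huv.
have [q [w sq]] := @dist_walk _ e u v con.
have hq : 2 * k + 2 <= size q by rewrite sq; lia.
pose x := nth u (u::q) 0; pose y := nth u (u::q) k.+1; pose z := nth u (u::q) (2 * k + 2).
have D : forall i j, i <= j -> j <= 2 * k + 2 -> dist e (nth u (u::q) i) (nth u (u::q) j) = j - i.
  move=> i j h1 h2; apply: (@geo_dist _ _ u u v q i j con w sq).
  by rewrite h1 (leq_trans h2 hq).
have Dxy : dist e x y = k.+1 by rewrite /x /y D //; lia.
have Dyz : dist e y z = k.+1 by rewrite /y /z D; lia.
have Dxz : dist e x z = 2 * k + 2 by rewrite /x /z D //; lia.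
have Dyx : dist e y x = k.+1 by rewrite (@dist_sym _ _ y x sym con).
have Dzy : dist e z y = k.+1 by rewrite (@dist_sym _ _ z y sym con).
have Dzx : dist e z x = 2 * k + 2 by rewrite (@dist_sym _ _ z x sym con).
have nxy : x != y by apply/negP => /eqP h; move: Dxy; rewrite h dist_refl.
have nyz : y != z by apply/negP => /eqP h; move: Dyz; rewrite h dist_refl.
have nxz : x != z by apply/negP => /eqP h; move: Dxz; rewrite h dist_refl addn2.
apply: (H [set x; y; z]).
  move=> a b; rewrite !inE => /orP [/orP [] | ] /eqP -> /orP [/orP [] | ] /eqP ->;
  rewrite ?eqxx // => _; rewrite ?Dxy ?Dyz ?Dxz ?Dyx ?Dzy ?Dzx; lia.
exists x, y, z, u, v, q; split.
  by rewrite !inE !eqxx /= ?orbT.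
split => //; split; apply: mem_nth; rewrite /= ltnS.
- by [].
- by apply: leq_trans hq; lia.
- by [].
Qed.

Theorem proposition4p1 (T : finType) (e : rel T) (k : nat) :
  simple_graph e -> connected_graph e -> 1 <= k ->
  (diam e <= 2 * k + 1 <-> forall S : {set T}, packing e k S -> gp_set e S).
Proof.
move=> [sym irr] con hk; split.
- exact: dir1.
- exact: dir2.
Qed.
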